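(* Consider the following Naive Uniform Elimination algorithm on a stream of $K$ arms, with input parameters $\varepsilon\in(0,1)$ and $\delta\in(0,1)$: maintain a single stored arm and a best empirical reward $\widehat{\mu}^*$ initialized to $0$; for each arriving $\mathsf{arm}_i$, pull it $\frac{16}{\varepsilon^2}\log(\frac{K}{\delta})$ times and record its empirical mean reward $\widehat{\mu}_i$; if $\widehat{\mu}_i>\widehat{\mu}^*$, discard the stored arm, store $\mathsf{arm}_i$ and set $\widehat{\mu}^*=\widehat{\mu}_i$; otherwise discard $\mathsf{arm}_i$ and keep the stored arm; at the end of the stream return the stored arm $\overline{\mathsf{arm}}$. Then for every integer $c\geq 1$, the returned arm has mean reward \[\mu_{\overline{\mathsf{arm}}}\geq \mu^*-c\cdot\varepsilon\] with probability at least $1-\left(\tfrac{1}{2}\right)^{c^2}\cdot\delta$.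
   Context: There are $K$ arms arriving one by one in a stream; each arm has an unknown reward distribution supported on $[0,1]$ with mean $\mu_i$, pulls give independent samples, and $\mu^*=\max_i\mu_i$. *)

(* Defs.v *)
From HB Require Import structures.
From mathcomp Require Import all_boot all_order all_algebra.
From mathcomp Require Import all_classical all_reals all_analysis.
Set Implicit Arguments. Unset Strict Implicit. Unset Printing Implicit Defensive.
Import Order.TTheory GRing.Theory Num.Theory.
Local Open Scope classical_set_scope.
Local Open Scope ring_scope.

Definition mutually_independent d (T : measurableType d) (R : realType)
  (P : probability T R) (I : eqType) (X : I -> T -> R) : Prop :=
  forall (S : seq I) (B : I -> set R), uniq S -> (forall i, measurable (B i)) ->
    P (\bigcap_(i in [set` S]) (X i @^-1` B i)) =
    (\prod_(i <- S) P (X i @^-1` B i))%E.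

Definition nue_pulls (R : realType) (K : nat) (eps delta : R) : nat :=
  `|Num.ceil (16 / eps ^+ 2 * ln (K%:R / delta))|%N.

Definition emp_mean (R : realType) (T : Type) (K N : nat)
  (X : 'I_K * nat -> T -> R) (i : 'I_K) (t : T) : R :=
  (\sum_(j < N) X (i, val j) t) / N%:R.

(* Naive Uniform Elimination: process arms in stream order, storing an arm and the
   best empirical mean (initially 0); a new arm replaces the stored one iff its
   empirical mean is strictly larger.  [i0] is the arm returned if no arm was
   ever stored (only possible when every empirical mean is 0). *)
Definition nue_output (R : realType) (K : nat) (i0 : 'I_K) (mh : 'I_K -> R) : 'I_K :=
  (foldl (fun (s : 'I_K * R) (i : 'I_K) => if s.2 < mh i then (i, mh i) else s)
         (i0, 0) (enum 'I_K)).1.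

(* Mean reward of arm i (all pulls of arm i are identically distributed). *)
Definition arm_mean d (T : measurableType d) (R : realType) (P : probability T R)
  (K : nat) (X : 'I_K * nat -> {RV P >-> R}) (i : 'I_K) : R :=
  fine ('E_P[X (i, 0%N)]).

Definition best_mean (R : realType) (K : nat) (i0 : 'I_K) (mu : 'I_K -> R) : R :=
  \big[Num.max/mu i0]_(i < K) mu i.

(* Main.v *)
Require Import Defs.
From HB Require Import structures.
From mathcomp Require Import all_boot all_order all_algebra.
From mathcomp Require Import all_classical all_reals all_analysis.
From mathcomp Require Import lra ring zify.
From mathcomp Require Import measurable_realfun.
Import Order.TTheory GRing.Theory Num.Theory.
Local Open Scope classical_set_scope.
Local Open Scope ring_scope.

Section S.
Variable R : realType.
Lemma expR_quad (x : R) : x <= 1 -> expR x <= 1 + x + 5/4 * x ^+ 2.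
Proof.
move=> x1.
have key : forall y : R, y < 1 -> (1 - y) * expR y <= 1.
  move=> y y1; have := expR_ge1Dx (- y); rewrite -[1 - y]/(1 + - y) => h.
  rewrite -[X in _ <= X](expRxMexpNx_1 y) mulrC ler_pM2l ?expR_gt0 //.
have [x0|x0] := lerP x 0.
  have h := key x (le_lt_trans x0 ltr01).
  have e0 := expR_gt0 x.
  set e := expR x in h e0 *.
  nra.
pose y := x / 4.
have hy : x = 4%:R * y by rewrite /y; field.
have h := key y ltac:(rewrite /y; lra).
have e0 := expR_gt0 y.
rewrite hy expRM_natl.
set e := expR y in h e0 *.
have y0 : 0 <= y by rewrite /y; lra.
have y1 : y <= 1/4 by rewrite /y; lra.
have a0 : 0 < 1 - y by lra.
have h4 : ((1 - y) * e) ^+ 4 <= 1.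
  apply: exprn_ile1 => //; nra.
have hq : 1 <= (1 - y) ^+ 4 * (1 + 4%:R * y + 5 / 4 * (4%:R * y) ^+ 2).
  nra.
rewrite exprMn in h4.
have := le_trans h4 hq.
rewrite ler_pM2l ?exprn_gt0 //.
Qed.
Lemma mgf_bound (I : finType) (p z : I -> R) (lam : R) :
  (forall i, 0 <= p i) -> \sum_i p i = 1 -> (forall i, 0 <= z i <= 1) ->
  0 <= lam <= 1 ->
  \sum_i p i * expR (lam * z i) <=
  expR (lam * (\sum_i p i * z i) + 5/16 * lam ^+ 2).
Proof.
move=> p0 p1 z01 lam01.
set m := \sum_i p i * z i.
have m0 : 0 <= m by apply: sumr_ge0 => i _; apply: mulr_ge0 => //; case/andP: (z01 i).
have m1 : m <= 1.
  rewrite -p1; apply: ler_sum => i _; have := p0 i; have := z01 i; nra.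
set S2 := \sum_i p i * z i ^+ 2.
have S2m : S2 <= m by apply: ler_sum => i _; apply: ler_wpM2l => //; have := z01 i; nra.
have e1 : \sum_i p i * expR (lam * z i) =
   expR (lam * m) * \sum_i p i * expR (lam * (z i - m)).
  rewrite mulr_sumr; apply: eq_bigr => i _.
  by rewrite mulrCA -expRD; congr (_ * expR _); ring.
rewrite e1 expRD ler_pM2l ?expR_gt0 //.
apply: (@le_trans _ _ (\sum_i p i * (1 + lam * (z i - m) + 5/4 * (lam * (z i - m)) ^+ 2))).
  apply: ler_sum => i _; apply: ler_wpM2l => //; apply: expR_quad.
  have := z01 i; nra.
have e2 : \sum_i p i * (1 + lam * (z i - m) + 5/4 * (lam * (z i - m)) ^+ 2) =
   \sum_i p i + (lam - 5/2 * lam ^+ 2 * m) * m + (5/4 * lam ^+ 2) * S2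
   + (- lam * m + 5/4 * lam ^+ 2 * m ^+ 2) * \sum_i p i.
  rewrite (eq_bigr (fun i => p i + (lam - 5/2 * lam ^+ 2 * m) * (p i * z i) +
     (5/4 * lam ^+ 2) * (p i * z i ^+ 2) + (- lam * m + 5/4 * lam ^+ 2 * m ^+ 2) * p i)); last first.
    by move=> i _; field.
  by rewrite !big_split /= -!mulr_sumr.
rewrite e2 p1.
apply: (@le_trans _ _ (1 + 5/16 * lam ^+ 2)); last by apply: expR_ge1Dx.
have h1 : S2 - m ^+ 2 <= 1/4 by have := sqr_ge0 (m - 1/2); nra.
have h2 : lam ^+ 2 * (S2 - m ^+ 2) <= lam ^+ 2 * (1/4).
  by apply: ler_wpM2l => //; apply: sqr_ge0.
have -> : 1 + (lam - 5 / 2 * lam ^+ 2 * m) * m + 5 / 4 * lam ^+ 2 * S2 +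
  (- lam * m + 5 / 4 * lam ^+ 2 * m ^+ 2) * 1 = 1 + 5/4 * (lam ^+ 2 * (S2 - m ^+ 2)).
  by field.
lra.
Qed.
Lemma chernoff_fin (n M : nat) (p : 'I_M.+1 -> R) (lam t : R) :
  (forall k, 0 <= p k) -> \sum_k p k = 1 -> 0 <= lam <= 1 ->
  \sum_(f : {ffun 'I_n -> 'I_M.+1} | t <= \sum_j (f j)%:R / M%:R) \prod_j p (f j)
   <= expR (lam * (n%:R * (\sum_k p k * (k%:R / M%:R)) - t) + n%:R * (5/16 * lam ^+ 2)).
Proof.
move=> p0 p1 lam01.
pose z := fun k : 'I_M.+1 => (k%:R / M%:R : R).
have z01 : forall k, 0 <= z k <= 1.
  move=> k; rewrite /z; apply/andP; split; first by apply: divr_ge0.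
  have [M0|M0] := eqVneq M 0%N.
    have -> : (M%:R : R) = 0 by rewrite M0.
    by rewrite invr0 mulr0.
  rewrite ler_pdivrMr ?ltr0n ?lt0n // mul1r ler_nat -ltnS; exact: ltn_ord.
pose G := fun f : {ffun 'I_n -> 'I_M.+1} =>
   expR (- (lam * t)) * \prod_j (p (f j) * expR (lam * z (f j))).
apply: (@le_trans _ _ (\sum_f G f)).
  rewrite big_mkcond /=; apply: ler_sum => f _.
  have G0 : 0 <= G f.
    by apply: mulr_ge0; [exact: expR_ge0 | apply: prodr_ge0 => j _; apply: mulr_ge0; [exact: p0 | exact: expR_ge0]].
  case: ifP => // ht.
  have -> : G f = \prod_j p (f j) * expR (lam * (\sum_j z (f j) - t)).
    rewrite /G big_split /= mulrCA; congr (_ * _).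
    by rewrite mulrBr expRD mulrC mulr_sumr expR_sum.
  rewrite -[X in X <= _]mulr1; apply: ler_wpM2l.
    by apply: prodr_ge0 => j _; exact: p0.
  rewrite -expR0 ler_expR; apply: mulr_ge0; first by case/andP: lam01.
  by rewrite subr_ge0.
rewrite /G -mulr_sumr.
rewrite -(bigA_distr_bigA (fun (j : 'I_n) (k : 'I_M.+1) => p k * expR (lam * z k))) /= prodr_const card_ord.
set m := \sum_(k < M.+1) p k * (k%:R / M%:R).
have -> : lam * (n%:R * m - t) + n%:R * (5 / 16 * lam ^+ 2) =
   - (lam * t) + n%:R * (lam * m + 5/16 * lam ^+ 2) by ring.
rewrite expRD ler_pM2l ?expR_gt0 // expRM_natl.
apply: lerXn2r.
- by rewrite qualifE /=; apply: sumr_ge0 => k _; apply: mulr_ge0; [exact: p0 | exact: expR_ge0].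
- by rewrite qualifE /=; apply: expR_ge0.
exact: mgf_bound.
Qed.
End S.


Lemma sub_fin d (T : measurableType d) (R : realType) (P : probability T R)
  (I : finType) (Q : pred I) (F : I -> set T) (A : set T) :
  measurable A -> (forall i, measurable (F i)) ->
  A `<=` \big[setU/set0]_(i | Q i) F i ->
  (P A <= \sum_(i | Q i) P (F i))%E.
Proof.
move=> mA mF AF.
have H : forall s : seq I, (P (\big[setU/set0]_(i <- s | Q i) F i) <= \sum_(i <- s | Q i) P (F i))%E
   /\ measurable (\big[setU/set0]_(i <- s | Q i) F i).
  elim=> [|a s [IH mU]]; first by rewrite !big_nil measure0.
  rewrite !big_cons; case: (Q a) => //; split; last exact: measurableU.
  apply: (le_trans (measureU2 P (mF a) mU)).
  by apply: leeD2l.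
have [h1 h2] := H (index_enum I).
apply: le_trans h1; apply: le_measure => //; rewrite inE //.
Qed.


Section Core.
Variables (d : measure_display) (T : measurableType d) (R : realType) (P : probability T R).

Lemma int01 (V : T -> R) : measurable_fun setT V -> (forall t, 0 <= V t <= 1) ->
  (\int[P]_x (V x)%:E = (fine (\int[P]_x (V x)%:E)%E)%:E)%E /\
  0 <= fine (\int[P]_x (V x)%:E)%E <= 1.
Proof.
move=> mV V01.
have i0 : (0 <= \int[P]_x (V x)%:E)%E.
  by apply: integral_ge0 => x _; rewrite lee_fin; case/andP: (V01 x).
have i1 : (\int[P]_x (V x)%:E <= 1)%E.
  apply: (@le_trans _ _ (\int[P]_x (cst 1%:E x))%E).
    apply: ge0_le_integral => //.
    - by move=> x _; rewrite lee_fin; case/andP: (V01 x).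
    - exact/measurable_EFinP.
    - by move=> x _; rewrite lee_fin; case/andP: (V01 x).
  by rewrite integral_cst // mul1e probability_le1.
have fin : (\int[P]_x (V x)%:E)%E \is a fin_num.
  by rewrite ge0_fin_numE // (le_lt_trans i1) // ltry.
split; first by rewrite fineK.
by apply/andP; split; rewrite -lee_fin fineK.
Qed.
Lemma core (n : nat) (W : nat -> T -> R) (s : R) :
  (0 < n)%N ->
  (forall j, measurable_fun setT (W j)) ->
  (forall j t, 0 <= W j t <= 1) ->
  (forall B : nat -> set R, (forall j, measurable (B j)) ->
     P (\bigcap_(j in [set` iota 0 n]) (W j @^-1` B j)) =
     (\prod_(j <- iota 0 n) P (W j @^-1` B j))%E) ->
  (forall j A, measurable A -> P (W j @^-1` A) = P (W 0%N @^-1` A)) ->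
  0 < s ->
  (P [set t | (fine (\int[P]_x (W 0%N x)%:E)%E + s <= (\sum_(j < n) W j t) / n%:R)%R]
   <= (expR (- (n%:R * s ^+ 2 / 2)))%:E)%E.
Proof.
case: n => // n _ mW W01 hind hid s0.
have [hI mu01] := int01 (W 0%N) (mW 0%N) (W01 0%N).
set mu0 := fine _ in hI mu01 *.
set A := [set t | _].
have mA : measurable A.
  have mg : measurable_fun setT (fun t => (\sum_(j < n.+1) W j t) / n.+1%:R).
    apply: measurable_funM; last exact: measurable_cst.
    exact: measurable_sum.
  have := mg measurableT _ (measurable_itv `[(mu0 + s), +oo[); rewrite setTI.
  congr measurable; apply/seteqP; split => t /=; rewrite in_itv /= andbT //.
have avg1 : forall t, (\sum_(j < n.+1) W j t) / n.+1%:R <= 1.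
  move=> t; rewrite ler_pdivrMr ?ltr0n // mul1r.
  apply: (@le_trans _ _ (\sum_(j < n.+1) 1)); last by rewrite sumr_const card_ord.
  by apply: ler_sum => j _; case/andP: (W01 j t).
have [s1|s1] := ltrP 1 s.
  have -> : A = set0.
    apply/seteqP; split => t //= At.
    have := avg1 t; have := At; rewrite /A /=; case/andP: mu01 => m0 _.
    move=> h1 h2; have := le_trans h1 h2; apply/negP; rewrite -ltNge; apply: (lt_le_trans s1).
    by rewrite lerDr.
  by rewrite measure0 lee_fin expR_ge0.
have [M M0 hM] : exists2 M : nat, (0 < M)%N & 8 / s < M%:R.
  exists (Num.Def.archi_bound (8 / s)).+1 => //.
  apply: (lt_le_trans (archi_boundP _)); first by apply: divr_ge0 => //; apply: ltW.
  by rewrite ler_nat.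
have iM : 1 / M%:R <= s / 8.
  have M0' : (0 : R) < M%:R by rewrite ltr0n.
  rewrite ler_pdivrMr // mulrC mulrA ler_pdivlMr //; rewrite ltr_pdivrMr // in hM; lra.
pose I (k : nat) : set R := `](k%:R - 1) / M%:R, k%:R / M%:R]%classic.
have mI : forall k, measurable (I k) by move=> k; exact: measurable_itv.
pose lev (y : R) : nat := `|Num.ceil (y * M%:R)|%N.
have M0' : (0 : R) < M%:R by rewrite ltr0n.
have levP : forall y, 0 <= y <= 1 -> (lev y <= M)%N /\ I (lev y) y.
  move=> y /andP[y0 y1].
  have c0 : 0 <= Num.ceil (y * M%:R) by rewrite ceil_ge0; nra.
  have lE : (lev y)%:R = (Num.ceil (y * M%:R))%:~R :> R.
    by rewrite /lev natr_absz ger0_norm.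
  split.
    rewrite -(ler_nat R) lE.
    have : Num.ceil (y * M%:R) <= M%:Z by rewrite ceil_le_int; nra.
    by rewrite -(ler_int R).
  rewrite /I /= in_itv /= lE.
  have := ceil_itv (y * M%:R); rewrite intrD /= => /andP[h1 h2].
  rewrite ler_pdivlMr // ltr_pdivrMr //; apply/andP; split; last by [].
  by move: h1; rewrite mulrC.
have Iuniq : forall y k k', I k y -> I k' y -> k = k'.
  move=> y k k'; rewrite /I /= !in_itv /= => /andP[a1 a2] /andP[b1 b2].
  rewrite ltr_pdivrMr // in a1; rewrite ltr_pdivrMr // in b1.
  rewrite ler_pdivlMr // in a2; rewrite ler_pdivlMr // in b2.
  apply/eqP; rewrite eqn_leq; apply/andP; split; rewrite -ltnS -(ltr_nat R) -natr1; lra.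
pose E (j k : nat) := W j @^-1` I k.
have mE : forall j k, measurable (E j k).
  by move=> j k; have := mW j measurableT _ (mI k); rewrite setTI.
have Pfin : forall j k, P (E j k) = (fine (P (E j k)))%:E.
  by move=> j k; rewrite fineK // fin_num_measure.
pose p (k : 'I_M.+1) := fine (P (E 0%N k)).
have p0 : forall k, 0 <= p k by move=> k; apply: fine_ge0.
have Pp : forall j (k : 'I_M.+1), P (E j k) = (p k)%:E.
  by move=> j k; rewrite /p -Pfin /E hid.
have levW : forall j t, (lev (W j t) <= M)%N /\ I (lev (W j t)) (W j t).
  by move=> j t; apply: levP.
pose kk j t : 'I_M.+1 := inord (lev (W j t)).
have kkE : forall j t, (kk j t : nat) = lev (W j t).
  by move=> j t; rewrite /kk inordK // ltnS; case: (levW j t).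
have psum : \sum_k p k = 1.
  apply: EFin_inj; rewrite -sumEFin.
  rewrite (eq_bigr (fun k : 'I_M.+1 => P (E 0%N k))); last by move=> k _; rewrite Pp.
  rewrite -measure_bigsetU_ord //; last first.
    move=> i j _ _ [t [hi hj]]; apply: val_inj; exact: Iuniq hi hj.
  rewrite -(@probability_setT _ _ _ P); congr (P _).
  apply/seteqP; split => // t _.
  rewrite -(bigcup_mkord _ (fun k => E 0%N k)).
  exists (lev (W 0%N t)); last exact: (levW 0%N t).2.
  by rewrite /= ltnS; case: (levW 0%N t).
pose g (t : T) : R := \sum_(k < M.+1) (k%:R / M%:R) * \1_(E 0%N k) t.
have mg : measurable_fun setT g.
  apply: measurable_sum => k; apply: measurable_funM; first exact: measurable_cst.
  exact: measurable_indic.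
have gle : forall t, g t <= W 0%N t + 1 / M%:R.
  move=> t; rewrite /g (bigD1 (kk 0%N t)) //= big1 ?addr0; last first.
    move=> k hk; rewrite indicE.
    have -> : (t \in E 0%N k) = false.
      apply/negP; rewrite inE => hkt; move/eqP: hk; apply; apply: val_inj.
      rewrite /= kkE; exact: Iuniq hkt (levW 0%N t).2.
    by rewrite mulr0.
  rewrite indicE.
  have -> : (t \in E 0%N (kk 0%N t)) = true.
    by apply/idP; rewrite inE /E /= kkE; exact: (levW 0%N t).2.
  rewrite mulr1 kkE.
  have := (levW 0%N t).2; rewrite /I /= in_itv /= => /andP[h _].
  rewrite mulrBl in h; lra.
have int_g : ((\sum_k p k * (k%:R / M%:R))%:E = \int[P]_t (g t)%:E)%E.
  rewrite /g; under eq_integral => x _ do rewrite -sumEFin.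
  rewrite ge0_integral_sum //; last first.
    move=> k; apply/measurable_EFinP; apply: measurable_funM; first exact: measurable_cst.
    exact: measurable_indic.
  rewrite -sumEFin; apply: eq_bigr => k _.
  rewrite (@integralZl_indic _ _ _ P setT measurableT (fun=> E 0%N k) (k%:R / M%:R)) //; last first.
    by move=> hk; exfalso; move: hk; apply/negP; rewrite -leNgt; apply: divr_ge0.
  rewrite integral_indic // setIT mulrC EFinM; congr (_ * _)%E; exact/esym/Pp.
have ile : (\int[P]_t (g t)%:E <= \int[P]_t (W 0%N t + 1 / M%:R)%:E)%E.
  apply: ge0_le_integral => //.
  - move=> t _; rewrite lee_fin; apply: sumr_ge0 => k _; apply: mulr_ge0; last by rewrite indicE.
    by apply: divr_ge0.
  - exact/measurable_EFinP.
  - apply/measurable_EFinP; apply: measurable_funD => //; exact: measurable_cst.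
  - by move=> t _; rewrite lee_fin.
have iW : (\int[P]_t (W 0%N t + 1 / M%:R)%:E = (mu0 + 1 / M%:R)%:E)%E.
  under eq_integral => x _ do rewrite EFinD.
  rewrite ge0_integralD //.
  - rewrite hI integral_cst // EFinD; congr (_ + _)%E; rewrite -[RHS]mule1; congr (_ * _)%E; exact: probability_setT.
  all: try by move=> t _; rewrite lee_fin; case/andP: (W01 0%N t).
  all: try exact/measurable_EFinP.
  all: try by move=> t _; rewrite lee_fin; apply: divr_ge0.
  all: try exact: measurable_cst.
have mlemu : \sum_k p k * (k%:R / M%:R) <= mu0 + 1 / M%:R.
  by rewrite -lee_fin int_g -iW.
pose C (f : {ffun 'I_n.+1 -> 'I_M.+1}) :=
  \bigcap_(j in [set` iota 0 n.+1]) (W j @^-1` I (f (inord j))).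
have mC : forall f, measurable (C f).
  move=> f; apply: fin_bigcap_measurable; first exact: finite_seq.
  by move=> j _; exact: (mE j (f (inord j))).
pose Q := fun f : {ffun 'I_n.+1 -> 'I_M.+1} =>
  n.+1%:R * (mu0 + s) <= \sum_j (f j)%:R / M%:R.
have cover : A `<=` \big[setU/set0]_(f | Q f) C f.
  move=> t At.
  pose f := [ffun j : 'I_n.+1 => kk j t].
  have Qf : Q f.
    rewrite /Q; apply: (@le_trans _ _ (\sum_(j < n.+1) W j t)).
      by move: At; rewrite /A /= ler_pdivlMr ?ltr0n // mulrC.
    apply: ler_sum => j _; rewrite ffunE kkE.
    have := (levW j t).2; rewrite /I /= in_itv /= => /andP[_ h]; exact: h.
  rewrite (bigD1 f) //=; left.
  move=> j hj0; have : j \in iota 0 n.+1 := hj0; rewrite mem_iota add0n => /andP[_ hj].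
  rewrite /= ffunE kkE inordK //; exact: (levW j t).2.
have PC : forall f, P (C f) = (\prod_j p (f j))%:E.
  move=> f; rewrite /C hind; last by move=> j; exact: mI.
  rewrite (eq_bigr (fun j => (p (f (inord j)))%:E)); last by move=> j _; exact: Pp.
  rewrite prodEFin; congr EFin.
  rewrite -{1}(subn0 n.+1) -/(index_iota 0 n.+1) big_mkord.
  by apply: eq_bigr => j _; rewrite inord_val.
apply: (le_trans (@sub_fin _ _ _ P _ Q _ _ mA mC cover)).

rewrite (eq_bigr (fun f : {ffun 'I_n.+1 -> 'I_M.+1} => (\prod_j p (f j))%:E)); last by move=> f _; exact: PC.
rewrite sumEFin lee_fin.
set lam := s - 1 / M%:R.
have lam0 : 0 <= lam <= 1.
  rewrite /lam; have : (0 : R) <= 1 / M%:R by apply: divr_ge0.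
  move=> h; apply/andP; split; lra.
apply: (le_trans (@chernoff_fin R n.+1 M p lam (n.+1%:R * (mu0 + s)) p0 psum lam0)).
rewrite ler_expR.
set m := \sum_k p k * (k%:R / M%:R) in mlemu *.
have n0 : (0 : R) <= n.+1%:R by [].
have h1 : n.+1%:R * m - n.+1%:R * (mu0 + s) <= - (n.+1%:R * lam).
  rewrite /lam; nra.
have h2 : lam * (n.+1%:R * m - n.+1%:R * (mu0 + s)) <= - (n.+1%:R * lam ^+ 2).
  case/andP: lam0 => l0 _.
  have := ler_wpM2l l0 h1; rewrite expr2; lra.
have h3 : s ^+ 2 / 2 <= 11 / 16 * lam ^+ 2.
  rewrite /lam; nra.
have h4 : n.+1%:R * (s ^+ 2 / 2) <= n.+1%:R * (11 / 16 * lam ^+ 2).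
  exact: ler_wpM2l.
lra.
Qed.
End Core.


Section Out.
Variables (R : realType) (K : nat) (i0 : 'I_K).

Definition stepF (mh : 'I_K -> R) (s : 'I_K * R) (i : 'I_K) : 'I_K * R :=
  if s.2 < mh i then (i, mh i) else s.

Lemma fold_inv (mh : 'I_K -> R) (l : seq 'I_K) (st : 'I_K * R) :
  let st' := foldl (stepF mh) st l in
  st.2 <= st'.2 /\ (forall i, i \in l -> mh i <= st'.2) /\
  (st'.2 = mh st'.1 \/ st' = st).
Proof.
elim: l st => [|a l IH] st /=; first by split => //; split => //; right.
have [h1 [h2 h3]] := IH (stepF mh st a).
have hA : st.2 <= (stepF mh st a).2 /\ mh a <= (stepF mh st a).2.
  rewrite /stepF; case: ifP => /= h; split => //; [exact: ltW|].
  by rewrite leNgt h.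
split; first exact: le_trans hA.1 h1.
split.
  move=> i; rewrite inE => /orP[/eqP->|il]; last exact: h2.
  exact: le_trans hA.2 h1.
case: h3 => [->|->]; first by left.
rewrite /stepF; case: ifP => _; [by left | by right].
Qed.

Lemma out_max (mh : 'I_K -> R) : (forall i, 0 <= mh i) ->
  forall i, mh i <= mh (nue_output i0 mh).
Proof.
move=> mh0 i.
have [h1 [h2 h3]] := fold_inv mh (enum 'I_K) (i0, 0).
rewrite /nue_output.
have -> : (fun (s : 'I_K * R) (i : 'I_K) => if s.2 < mh i then (i, mh i) else s) = stepF mh by [].
set st' := foldl _ _ _ in h1 h2 h3 *.
have hi := h2 i (mem_enum _ i).
case: h3 => [e|e].
  by rewrite -e.
rewrite e /= in hi *; exact: le_trans hi (mh0 i0).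
Qed.
Lemma const_meas d (T : measurableType d) (P : Prop) : measurable [set _ : T | P].
Proof.
have [p|np] := pselect P.
  by rewrite (_ : [set _ | P] = setT) //; apply/seteqP; split.
by rewrite (_ : [set _ | P] = set0) //; apply/seteqP; split.
Qed.

Lemma fold_meas d (T : measurableType d) (mh : 'I_K -> T -> R) :
  (forall i, measurable_fun setT (mh i)) ->
  forall (l : seq 'I_K) (st : T -> 'I_K * R),
  (forall i, measurable [set t | (st t).1 = i]) ->
  measurable_fun setT (fun t => (st t).2) ->
  (forall i, measurable [set t | (foldl (stepF (fun k => mh k t)) (st t) l).1 = i]) /\
  measurable_fun setT (fun t => (foldl (stepF (fun k => mh k t)) (st t) l).2).
Proof.
move=> mmh; elim=> [|a l IH] st mst1 mst2 //=.
apply: (IH (fun t => stepF (fun k => mh k t) (st t) a)).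
  have mlt : measurable [set t | (st t).2 < mh a t].
    have := measurable_fun_ltr mst2 (mmh a) measurableT (Y := [set true]) ltac:(by []).
    by rewrite setTI.
  move=> i; rewrite /stepF.
  rewrite (_ : [set t | _] = ([set t | (st t).2 < mh a t] `&` [set _ | a = i]) `|`
     (~` [set t | (st t).2 < mh a t] `&` [set t | (st t).1 = i])).
    apply: measurableU; apply: measurableI => //; first exact: const_meas.
    exact: measurableC.
  apply/seteqP; split => t /=; case: ifP => h /=.
  - by move=> ->; left.
  - by move=> ->; right; split => //; rewrite h.
  - by case => -[] // _ ->.
  - by case => -[] //.
rewrite /stepF /=.
rewrite (_ : (fun t => _) = (fun t => if (st t).2 < mh a t then mh a t else (st t).2)).
  apply: measurable_fun_ifT => //; exact: measurable_fun_ltr.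
by apply: funext => t; case: ifP.
Qed.

Lemma out_meas d (T : measurableType d) (mh : 'I_K -> T -> R) :
  (forall i, measurable_fun setT (mh i)) ->
  forall i, measurable [set t | nue_output i0 (fun k => mh k t) = i].
Proof.
move=> mmh i.
have [h _] := @fold_meas d T mh mmh (enum 'I_K) (fun _ => (i0, 0)) (fun i => const_meas _ _ _) (measurable_cst _).
exact: h.
Qed.
End Out.


Lemma numeric (R : realType) (K c : nat) (eps delta Nr : R) :
  (2 <= K)%N -> (1 <= c)%N -> 0 < eps -> 0 < delta < 1 ->
  16 / eps ^+ 2 * ln (K%:R / delta) <= Nr ->
  K%:R * expR (- (Nr * (c%:R * eps / 2) ^+ 2 / 2)) <= (1 / 2) ^+ (c ^ 2) * delta.
Proof.
move=> K2 c1 e0 /andP[d0 d1] hN.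
have K2r : (2 : R) <= K%:R by rewrite (ler_nat R 2 K).
have Kd : 2 <= K%:R / delta.
  rewrite ler_pdivlMr //; nra.
set L := ln (K%:R / delta) in hN *.
have L2 : ln 2 <= L by rewrite /L ler_ln ?posrE //; lra.
have ln20 : 0 < ln (2 : R) by apply: ln_gt0; lra.
have c1r : (1 : R) <= c%:R by rewrite (ler_nat R 1 c).
set cc := c%:R in c1r *.
have h1 : 2 * cc ^+ 2 * L <= Nr * (cc * eps / 2) ^+ 2 / 2.
  have -> : 2 * cc ^+ 2 * L = (16 / eps ^+ 2 * L) * (cc * eps / 2) ^+ 2 / 2.
    by field; apply/eqP; lra.
  apply: ler_wpM2r; first by rewrite invr_ge0; lra.
  apply: ler_wpM2r => //; exact: sqr_ge0.
apply: (@le_trans _ _ (K%:R * expR (- (2 * cc ^+ 2 * L)))).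
  apply: ler_wpM2l => //; rewrite ler_expR; lra.
have eL : expR (- L) = delta / K%:R.
  rewrite expRN /L lnK ?posrE; last by apply: divr_gt0 => //; lra.
  by rewrite invf_div.
have -> : - (2 * cc ^+ 2 * L) = - L + - ((2 * cc ^+ 2 - 1) * L) by ring.
rewrite expRD eL mulrA mulrCA divff ?mulr1; last by apply/eqP; lra.
rewrite mulrC ler_wpM2r //; first by lra.
have -> : (1 / 2 : R) ^+ (c ^ 2) = expR (- ln 2) ^+ (c ^ 2).
  by rewrite expRN lnK ?posrE // div1r.
rewrite -expRM_natl ler_expR natrX -/cc.
have hc : cc ^+ 2 <= 2 * cc ^+ 2 - 1 by nra.
have : cc ^+ 2 * ln 2 <= (2 * cc ^+ 2 - 1) * L.
  apply: (@le_trans _ _ (cc ^+ 2 * L)); first by apply: ler_wpM2l => //; exact: sqr_ge0.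
  by apply: ler_wpM2r => //; lra.
lra.
Qed.


Lemma indep_row d (T : measurableType d) (R : realType) (P : probability T R) (K : nat)
  (X : 'I_K * nat -> T -> R) (g : R -> R) (i : 'I_K) (n : nat) :
  mutually_independent P X -> measurable_fun setT g ->
  forall B : nat -> set R, (forall j, measurable (B j)) ->
  P (\bigcap_(j in [set` iota 0 n]) ((fun t => g (X (i, j) t)) @^-1` B j)) =
  (\prod_(j <- iota 0 n) P ((fun t => g (X (i, j) t)) @^-1` B j))%E.
Proof.
move=> hind mg B mB.
have := hind (map (pair i) (iota 0 n)) (fun ij => g @^-1` B ij.2).
rewrite big_map => <- //.
- congr (P _); apply/seteqP; split => t /= h.
  + move=> ij hij; have : ij \in map (pair i) (iota 0 n) := hij.
    by case/mapP => j hj ->; exact: h.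
  + move=> j hj; have : (i, j) \in map (pair i) (iota 0 n) by apply: map_f.
    by move/h.
- by rewrite map_inj_uniq ?iota_uniq // => a b [].
- by move=> ij; have := mg measurableT _ (mB ij.2); rewrite setTI.
Qed.

Lemma int_compl d (T : measurableType d) (R : realType) (P : probability T R) (V : T -> R) :
  measurable_fun setT V -> (forall t, 0 <= V t <= 1) ->
  fine (\int[P]_x (1 - V x)%:E)%E = 1 - fine (\int[P]_x (V x)%:E)%E.
Proof.
move=> mV V01.
have mV' : measurable_fun setT (fun x => 1 - V x).
  by apply: measurable_funB => //; exact: measurable_cst.
have V01' : forall t, 0 <= 1 - V t <= 1 by move=> t; have := V01 t; move=> /andP[? ?]; apply/andP; split; lra.
have [h1 _] := @int01 _ _ _ P V mV V01.
have [h2 _] := @int01 _ _ _ P _ mV' V01'.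
have : (\int[P]_x ((1 - V x)%:E + (V x)%:E) = \int[P]_x (1 - V x)%:E + \int[P]_x (V x)%:E)%E.
  apply: ge0_integralD => //.
  - by move=> x _; rewrite lee_fin; case/andP: (V01' x).
  - exact/measurable_EFinP.
  - by move=> x _; rewrite lee_fin; case/andP: (V01 x).
  - exact/measurable_EFinP.
rewrite h1 h2 -EFinD.
under eq_integral => x _ do rewrite -EFinD subrK.
rewrite integral_cst //= mul1e.
have -> : P setT = 1%E by exact: probability_setT.
move=> h; have : (1 : R) = fine (\int[P]_x (1 - V x)%:E)%E + fine (\int[P]_x (V x)%:E)%E by apply: EFin_inj; rewrite -h.
lra.
Qed.

Lemma meas_avg d (T : measurableType d) (R : realType) (n : nat) (W : nat -> T -> R) (c : R) :
  (forall j, measurable_fun setT (W j)) ->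
  measurable [set t | (c <= (\sum_(j < n) W j t) / n%:R)%R].
Proof.
move=> mW.
have mg : measurable_fun setT (fun t => (\sum_(j < n) W j t) / n%:R).
  apply: measurable_funM; last exact: measurable_cst.
  exact: measurable_sum.
have := mg measurableT _ (measurable_itv `[c, +oo[); rewrite setTI.
congr measurable; apply/seteqP; split => t /=; rewrite in_itv /= andbT //.
Qed.

Theorem lemma5p2 (d : measure_display) (T : measurableType d) (R : realType)
  (P : probability T R) (K : nat) (hK : (0 < K)%N)
  (X : 'I_K * nat -> {RV P >-> R}) (eps delta : R) (c : nat) :
  0 < eps < 1 -> 0 < delta < 1 -> (1 <= c)%N ->
  (* rewards supported on [0,1] *)
  (forall ij t, 0 <= X ij t <= 1) ->
  (* all pulls are mutually independent *)
  mutually_independent P (fun ij => (X ij : T -> R)) ->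
  (* pulls of the same arm are identically distributed *)
  (forall i j A, measurable A ->
     distribution P (X (i, j)) A = distribution P (X (i, 0%N)) A) ->
  let i0 := Ordinal hK in
  let N := nue_pulls K eps delta in
  let mu := arm_mean X in
  let out := fun t => nue_output i0 (fun i => emp_mean N (fun ij => (X ij : T -> R)) i t) in
  (P [set t | (best_mean i0 mu - c%:R * eps <= mu (out t))%R]
     >= (1 - (1 / 2) ^+ (c ^ 2) * delta)%:E)%E.
Proof.
move=> /andP[e0 e1] /andP[d0 d1] c1 X01 hind hid.
cbv zeta.
set i0 := Ordinal hK.
set N := nue_pulls K eps delta.
set mu := arm_mean X.
pose Xf := fun ij => (X ij : T -> R).
pose mh := fun i t => emp_mean N Xf i t.
have mX : forall ij, measurable_fun setT (Xf ij) by move=> ij; exact: measurable_funPT.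
have mmh : forall i, measurable_fun setT (mh i).
  move=> i; rewrite /mh /emp_mean; apply: measurable_funM; last exact: measurable_cst.
  by apply: measurable_sum => j; exact: mX.
have mh0 : forall i t, 0 <= mh i t.
  move=> i t; apply: divr_ge0 => //; apply: sumr_ge0 => j _; by case/andP: (X01 (i, val j) t).
have ce0 : 0 <= c%:R * eps by apply: mulr_ge0 => //; apply: ltW.
set best := best_mean i0 mu.
pose out t := nue_output i0 (fun i => mh i t).
have bestle : forall b, (forall i, mu i <= mu b) -> best <= mu b.
  move=> b hb; rewrite /best /best_mean.
  by apply: (big_ind (fun y => y <= mu b)) => // x y hx hy; rewrite ge_max hx hy.
set G := [set t | _].
have mG : measurable G.
  have -> : G = \big[setU/set0]_(i < K) ([set t | out t = i] `&` [set _ | best - c%:R * eps <= mu i]).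
    apply/seteqP; split => t.
      move=> Gt; rewrite (bigD1 (out t)) //=; left; split => //.
    apply: (big_ind (fun S => S `<=` G)) => //.
      by move=> S1 S2 h1 h2 x [/h1|/h2].
    by move=> i _ x [/= <-].
  apply: bigsetU_measurable => i _; apply: measurableI; last exact: const_meas.
  exact: (@out_meas R K i0 d T mh mmh i).
have P1 : P [set: T] = 1%E by exact: probability_setT.
have hq0 : 0 <= (1 / 2) ^+ (c ^ 2) * delta :> R.
  by apply: mulr_ge0; [apply: exprn_ge0; lra | lra].
have [K1|K2] := leqP K 1.
  have allI : forall i j : 'I_K, i = j.
    move=> i j; apply: val_inj => /=; move: (ltn_ord i) (ltn_ord j); lia.
  have -> : G = setT.
    apply/seteqP; split => // t _.
    change (best - c%:R * eps <= mu (out t)).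
    have := bestle (out t) (fun i => ltac:(by rewrite (allI i (out t)))); lra.
  rewrite P1.
  have : ((1 - (1 / 2) ^+ (c ^ 2) * delta)%:E <= 1%:E)%E by rewrite lee_fin; lra.
  by [].
have [b hb] : exists b, forall i, mu i <= mu b.
  exists [arg max_(i > i0) mu i]%O.
  by case: arg_maxP => //= j _ hj i; apply: hj.
have hbest := bestle b hb.
set s := c%:R * eps / 2.
have s0 : 0 < s.
  by rewrite /s; apply: divr_gt0 => //; apply: mulr_gt0 => //; rewrite ltr0n.
have Kd : 1 < K%:R / delta.
  have K2r : (2 : R) <= K%:R by rewrite (ler_nat R 2 K).
  rewrite ltr_pdivlMr //; nra.
have L0 : 0 < ln (K%:R / delta) by apply: ln_gt0.
have x0 : 0 < 16 / eps ^+ 2 * ln (K%:R / delta).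
  by apply: mulr_gt0 => //; apply: divr_gt0 => //; apply: exprn_gt0.
have hN : 16 / eps ^+ 2 * ln (K%:R / delta) <= N%:R.
  rewrite /N /nue_pulls natr_absz ger0_norm; first exact: ceil_ge.
  by rewrite ceil_ge0; lra.
have N0 : (0 < N)%N by rewrite -(ltr_nat R); lra.
pose Wu (i : 'I_K) := fun (j : nat) (t : T) => Xf (i, j) t.
pose Wl := fun (j : nat) (t : T) => 1 - Xf (b, j) t.
have mg1 : measurable_fun setT (fun y : R => 1 - y).
  by apply: measurable_funB; [exact: measurable_cst | exact: measurable_id].
have mWu : forall i j, measurable_fun setT (Wu i j) by move=> i j; exact: mX.
have mWl : forall j, measurable_fun setT (Wl j).
  move=> j; apply: measurable_funB; [exact: measurable_cst | exact: mX].
have W01u : forall i j t, 0 <= Wu i j t <= 1 by move=> i j t; exact: X01.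
have W01l : forall j t, 0 <= Wl j t <= 1.
  by move=> j t; rewrite /Wl; have := X01 (b, j) t => /andP[h1 h2]; apply/andP; split; rewrite ?subr_ge0 ?lerBlDr ?lerDl //.
have hindu : forall i (B : nat -> set R), (forall j, measurable (B j)) ->
     P (\bigcap_(j in [set` iota 0 N]) (Wu i j @^-1` B j)) =
     (\prod_(j <- iota 0 N) P (Wu i j @^-1` B j))%E.
  move=> i B mB; have H := @indep_row d T R P K Xf id i N hind.
  have H2 := H (@measurable_id _ R setT) B mB.
  exact: H2.
have hindl : forall (B : nat -> set R), (forall j, measurable (B j)) ->
     P (\bigcap_(j in [set` iota 0 N]) (Wl j @^-1` B j)) =
     (\prod_(j <- iota 0 N) P (Wl j @^-1` B j))%E.
  by move=> B mB; exact: (@indep_row d T R P K Xf (fun y => 1 - y) b N hind mg1 B mB).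
have hidu : forall i j A, measurable A -> P (Wu i j @^-1` A) = P (Wu i 0%N @^-1` A).
  by move=> i j A mA; exact: hid.
have hidl : forall j A, measurable A -> P (Wl j @^-1` A) = P (Wl 0%N @^-1` A).
  move=> j A mA; have mA' : measurable ((fun y : R => 1 - y) @^-1` A).
    by have := mg1 measurableT _ mA; rewrite setTI.
  exact: (hid b j _ mA').
set e := expR (- (N%:R * s ^+ 2 / 2)).
pose U (i : 'I_K) := [set t | (fine (\int[P]_x (Wu i 0%N x)%:E)%E + s <= (\sum_(j < N) Wu i j t) / N%:R)%R].
pose Lb := [set t | (fine (\int[P]_x (Wl 0%N x)%:E)%E + s <= (\sum_(j < N) Wl j t) / N%:R)%R].
have hU : forall i, (P (U i) <= e%:E)%E.
  by move=> i; exact: (@core d T R P N (Wu i) s N0 (mWu i) (W01u i) (hindu i) (hidu i) s0).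
have hL : (P Lb <= e%:E)%E.
  exact: (@core d T R P N Wl s N0 mWl W01l hindl hidl s0).
pose F (j : 'I_K) := if j == b then Lb else U j.
have mF : forall j, measurable (F j).
  by move=> j; rewrite /F; case: ifP => _; apply: meas_avg.
have hF : forall j, (P (F j) <= e%:E)%E by move=> j; rewrite /F; case: ifP.
pose A := \big[setU/set0]_(j < K) F j.
have mA : measurable A by apply: bigsetU_measurable => j _; exact: mF.
have PA : (P A <= (K%:R * e)%:E)%E.
  apply: le_trans (@sub_fin d T R P _ xpredT F A mA mF (fun t h => h)) _.
  have HS2 : (\sum_(i < K) P (F i) <= \sum_(i < K) e%:E)%E.
    by apply: lee_sum => i _; exact: hF i.
  apply: le_trans HS2 _.
  by rewrite sumEFin sumr_const card_ord mulr_natl.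
have muE : forall i, mu i = fine (\int[P]_x (Wu i 0%N x)%:E)%E.
  by move=> i; rewrite /mu /arm_mean expectation_def.
have mubE : fine (\int[P]_x (Wl 0%N x)%:E)%E = 1 - mu b.
  rewrite muE; exact: (@int_compl d T R P (Xf (b, 0%N)) (mX _) (X01 _)).
have NR0 : (N%:R : R) != 0 by rewrite pnatr_eq0 -lt0n.
have sumL : forall t, (\sum_(j < N) Wl j t) / N%:R = 1 - mh b t.
  by move=> t; rewrite /Wl sumrB sumr_const card_ord mulrBl divff.
have compl : ~` A `<=` G.
  move=> t nA.
  have nF : forall j, ~ F j t.
    by move=> j Fj; apply: nA; rewrite /A (bigD1 j) //=; left.
  change (best - c%:R * eps <= mu (out t)).
  have hmax : mh b t <= mh (out t) t := @out_max R K i0 (fun i => mh i t) (fun i => mh0 i t) b.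
  case: (eqVneq (out t) b) => [ob|ob].
    rewrite ob; lra.
  have nU := nF (out t); rewrite /F (negbTE ob) /U /= -muE in nU.
  have nL := nF b; rewrite /F eqxx /Lb /= mubE sumL in nL.
  have hU' : mh (out t) t < mu (out t) + s by rewrite ltNge; apply/negP; exact: nU.
  have hL' : 1 - mh b t < 1 - mu b + s by rewrite ltNge; apply/negP; exact: nL.
  rewrite /s in hU' hL'; lra.
apply: (@le_trans _ _ (P (~` A))); last first.
  by apply: le_measure => //; rewrite inE; [exact: measurableC | exact: mG].
rewrite probability_setC //.
have fA : P A = (fine (P A))%:E by rewrite fineK // fin_num_measure.
rewrite fA in PA *; rewrite lee_fin in PA.
have hnum := @numeric R K c eps delta N%:R K2 c1 e0 ltac:(by apply/andP; split) hN.
rewrite -/s -/e in hnum.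
rewrite -EFinB lee_fin; lra.
Qed.
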